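(* Let $H$ be an Abelian group, $X$ a simplicial set and $\gamma:X_2\to H$ a normalized 2-cocycle. Then the maps $\eta_n:X_n\to N(H)_{n-1}=H^{n-1}$ defined inductively by $\eta_1(x)=0$, $\eta_2(x)=\gamma(x)$ and \[ \eta_n(x)=\big(\gamma(d_3\cdots d_n(x)),\ \eta_{n-1}(d_1x)-\eta_{n-1}(d_0x)\big)\in H\times H^{n-2}\qquad(n\ge3) \] define an $N(H)$-valued twisting function on $X$.
   Context: $N(H)$ is the nerve of $H$: $N(H)_n=H^n$, $d_0$ drops the first entry, $d_n$ drops the last, $d_i$ ($0<i<n$) replaces $a_i,a_{i+1}$ by $a_i+a_{i+1}$, $s_j$ inserts $0$ after the $j$-th entry. A normalized 2-cocycle is $\gamma:X_2\to H$ vanishing on degenerate simplices with $\gamma(d_0\sigma)-\gamma(d_1\sigma)+\gamma(d_2\sigma)-\gamma(d_3\sigma)=0$ for all $\sigma\in X_3$. An $N(H)$-valued twisting function is a family $\eta_n:X_n\to N(H)_{n-1}$, $n\ge1$, satisfying $d_0\eta(x)=\eta(d_1x)-\eta(d_0x)$, $d_i\eta(x)=\eta(d_{i+1}x)$ for $i>0$, $\eta(s_0x)=0$, $\eta(s_jx)=s_{j-1}\eta(x)$ for $j>0$; equivalently, it makes $\{N(H)_n\times X_n\}$ a simplicial set with $d_0(g,x)=(d_0g+\eta(x),d_0x)$ and the other structure maps componentwise. *)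

(* Defs.v *)
From mathcomp Require Import all_boot all_algebra.
Set Implicit Arguments. Unset Strict Implicit. Unset Printing Implicit Defensive.
Import GRing.Theory.
Local Open Scope ring_scope.

(* Simplicial sets: X_n = ss n, faces fc i : X_{n+1} -> X_n (0 <= i <= n+1),
   degeneracies dg j : X_n -> X_{n+1} (0 <= j <= n).  Indices are nats; the
   maps on out-of-range indices are unconstrained junk and never used. *)
Record sSet := SSet {
  ss : nat -> Type;
  fc : forall n, nat -> ss n.+1 -> ss n;
  dg : forall n, nat -> ss n -> ss n.+1;
  fc_fc : forall n i j (x : ss n.+2), (i < j)%N -> (j <= n.+2)%N ->
     fc i (fc j x) = fc j.-1 (fc i x);
  fc_dg_lt : forall n i j (x : ss n.+1), (i < j)%N -> (j <= n.+1)%N ->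
     fc i (dg j x) = dg j.-1 (fc i x);
  fc_dg_eq : forall n j (x : ss n), (j <= n)%N ->
     fc j (dg j x) = x /\ fc j.+1 (dg j x) = x;
  fc_dg_gt : forall n i j (x : ss n.+1), (j.+1 < i)%N -> (i <= n.+2)%N ->
     fc i (dg j x) = dg j (fc i.-1 x);
  dg_dg : forall n i j (x : ss n), (i <= j)%N -> (j <= n)%N ->
     dg i (dg j x) = dg j.+1 (dg i x)
}.
Arguments fc {s n}.
Arguments dg {s n}.

Section Nerve.
Variable H : zmodType.

(* The nerve N(H): N(H)_n = H^n, represented as sequences of length n. *)
(* face d_i on H^n: d_0 drops the first entry, d_n drops the last one,
   d_i (0<i<n) replaces a_i, a_{i+1} (1-based) by a_i + a_{i+1}. *)
Definition nface (i : nat) (s : seq H) : seq H :=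
  if i == 0%N then behead s
  else if (size s <= i)%N then take (size s).-1 s
  else take i.-1 s ++ (nth 0 s i.-1 + nth 0 s i) :: drop i.+1 s.

Definition ndeg (j : nat) (s : seq H) : seq H := take j s ++ 0 :: drop j s.

Definition seq_sub (s t : seq H) : seq H := [seq p.1 - p.2 | p <- zip s t].

Variable X : sSet.

Definition normalized_2cocycle (gamma : ss X 2 -> H) : Prop :=
  (forall y : ss X 1, gamma (dg 0 y) = 0 /\ gamma (dg 1 y) = 0) /\
  (forall sigma : ss X 3,
     gamma (fc 0 sigma) - gamma (fc 1 sigma) + gamma (fc 2 sigma)
       - gamma (fc 3 sigma) = 0).

(* An N(H)-valued twisting function; eta m : X_{m+1} -> N(H)_m = H^m,
   i.e. eta m is the paper's eta_{m+1}. *)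
Definition twisting_function (eta : forall m, ss X m.+1 -> seq H) : Prop :=
  [/\ forall m (x : ss X m.+1), size (eta m x) = m,
      forall m (x : ss X m.+2),
        nface 0 (eta m.+1 x) = seq_sub (eta m (fc 1 x)) (eta m (fc 0 x)),
      forall m i (x : ss X m.+2), (0 < i)%N -> (i <= m.+1)%N ->
        nface i (eta m.+1 x) = eta m (fc i.+1 x),
      forall m (x : ss X m), eta m (dg 0 x) = nseq m 0
    & forall m j (x : ss X m.+1), (0 < j)%N -> (j <= m.+1)%N ->
        eta m.+1 (dg j x) = ndeg j.-1 (eta m x)].

Local Unset Implicit Arguments.
(* to2 k x = d_3 ... d_{k+2} x for x in X_{k+2} (identity for k = 0) *)
Fixpoint to2 (k : nat) : ss X k.+2 -> ss X 2 :=
  match k return ss X k.+2 -> ss X 2 with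
  | 0 => fun x => x
  | S k' => fun x => to2 k' (@fc X k'.+2 k'.+3 x)
  end.

(* eta_aux gamma k = the paper's eta_{k+2} *)
Fixpoint eta_aux (gamma : ss X 2 -> H) (k : nat) : ss X k.+2 -> seq H :=
  match k return ss X k.+2 -> seq H with
  | 0 => fun x => [:: gamma x]
  | S k' => fun x => gamma (to2 k'.+1 x) ::
       seq_sub (eta_aux gamma k' (fc 1 x)) (eta_aux gamma k' (fc 0 x))
  end.

(* eta_from gamma m = the paper's eta_{m+1}: eta_1 = 0, eta_2 = gamma,
   eta_n x = (gamma (d_3 ... d_n x), eta_{n-1}(d_1 x) - eta_{n-1}(d_0 x)). *)
Definition eta_from (gamma : ss X 2 -> H) (m : nat) : ss X m.+1 -> seq H :=
  match m return ss X m.+1 -> seq H with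
  | 0 => fun _ => [::]
  | S k => eta_aux gamma k
  end.

End Nerve.
Arguments to2 {X}.
Arguments eta_aux {H X}.
Arguments eta_from {H X}.

(* Main.v *)
Require Import Defs.
From mathcomp Require Import all_boot all_algebra.
From mathcomp Require Import zify.
Set Implicit Arguments. Unset Strict Implicit. Unset Printing Implicit Defensive.
Import GRing.Theory.

Local Notation seq_sub := Defs.seq_sub.
Section Seqs.
Variable H : zmodType.
Implicit Types s t : seq H.

Lemma size_seq_sub s t : size (seq_sub s t) = minn (size s) (size t).
Proof. by rewrite /seq_sub size_map size_zip. Qed.

Lemma seq_sub_cons (a b : H) s t : seq_sub (a :: s) (b :: t) = (a - b)%R :: seq_sub s t.
Proof. by []. Qed.

Lemma seq_subss s : seq_sub s s = nseq (size s) 0%R.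
Proof. by elim: s => // a s IH; rewrite seq_sub_cons IH subrr. Qed.

Lemma seq_sub0 s : seq_sub s (nseq (size s) 0%R) = s.
Proof. by elim: s => // a s IH; rewrite /= seq_sub_cons IH subr0. Qed.

Lemma seq_sub_sub (a b c : seq H) : size a = size b -> size c = size b ->
  seq_sub (seq_sub a b) (seq_sub c b) = seq_sub a c.
Proof.
elim: a b c => [|x a IH] [|y b] [|z c] //= [Hab] [Hcb].
by rewrite !seq_sub_cons IH // opprB addrA subrK.
Qed.

Lemma nface_cons2 i (a : H) s : (i.+1 <= size s)%N ->
  nface i.+2 (a :: s) = a :: nface i.+1 s.
Proof.
move=> hs; rewrite /nface /=.
case: ifP => h.
  have e : size s = i.+1 by lia.
  by rewrite e leqnn /=.
have -> : (size s <= i.+1)%N = false by lia.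
by [].
Qed.

Lemma nface1 (a b : H) s : nface 1 (a :: b :: s) = (a + b)%R :: s.
Proof. by rewrite /nface /= drop0. Qed.

Lemma nface_sub i s t : size s = size t -> (i.+1 <= size s)%N ->
  nface i.+1 (seq_sub s t) = seq_sub (nface i.+1 s) (nface i.+1 t).
Proof.
elim: s t i => [|x s IH] [|y t] i // [Hst] hi.
rewrite seq_sub_cons.
case: i hi => [|i] hi.
  case: s t Hst {IH hi} => [|x' s] [|y' t] // Hst.
  by rewrite seq_sub_cons !nface1 seq_sub_cons addrACA opprD.
move: hi => /= hi.
rewrite !nface_cons2 ?size_seq_sub -?Hst ?minnn; try lia.
by rewrite seq_sub_cons IH //; lia.
Qed.

Lemma ndeg0 s : ndeg 0 s = 0%R :: s.
Proof. by rewrite /ndeg take0 drop0. Qed.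

Lemma ndegS j (a : H) s : ndeg j.+1 (a :: s) = a :: ndeg j s.
Proof. by []. Qed.

Lemma ndeg_sub j s t : size s = size t ->
  ndeg j (seq_sub s t) = seq_sub (ndeg j s) (ndeg j t).
Proof.
elim: s t j => [|x s IH] [|y t] [|j] // => Hst0.
- by rewrite /ndeg /Defs.seq_sub /= subr0.
- by rewrite /ndeg /Defs.seq_sub /= subr0.
- by rewrite !ndeg0 [RHS]seq_sub_cons subr0.
- have Hst : size s = size t by move: Hst0 => /= [].
  by rewrite seq_sub_cons !ndegS seq_sub_cons IH.
Qed.
End Seqs.

Section Simp.
Variable X : sSet.

Local Unset Implicit Arguments.
Fixpoint to3 (k : nat) : ss X k.+3 -> ss X 3 :=
  match k return ss X k.+3 -> ss X 3 with
  | 0 => fun x => x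
  | S k' => fun x => to3 k' (@fc X k'.+3 k'.+4 x)
  end.
Local Set Implicit Arguments.

Lemma ffc n i j (x : ss X n.+2) : (i < j)%N -> (j <= n.+2)%N ->
  fc i (fc j x) = fc j.-1 (fc i x).
Proof. exact: fc_fc. Qed.

Lemma to2_A k (x : ss X k.+3) : to2 k.+1 x = fc 3 (to3 k x).
Proof. elim: k x => [|k IH] x //; exact: IH. Qed.

Lemma to2_B k j (x : ss X k.+3) : (j <= 2)%N -> to2 k (fc j x) = fc j (to3 k x).
Proof.
move=> hj; elim: k x => [|k IH] x //.
change (to2 k (fc k.+3 (fc j x)) = fc j (to3 k (fc k.+4 x))).
rewrite -IH; congr (to2 k _); rewrite [RHS]ffc //; lia.
Qed.

Lemma to2_C k j (x : ss X k.+3) : (3 <= j)%N -> (j <= k.+3)%N ->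
  to2 k (fc j x) = to2 k.+1 x.
Proof.
elim: k x j => [|k IH] x j hj1 hj2.
  by have -> : j = 3 by lia.
case: (eqVneq j k.+4) => [->|hne]; first by [].
change (to2 k (fc k.+3 (fc j x)) = to2 k.+1 (fc k.+4 x)).
have e : fc j (fc k.+4 x) = fc k.+3 (fc j x) by rewrite ffc //; lia.
rewrite -e; apply: IH; lia.
Qed.

Lemma to2_D k j (x : ss X k.+2) : (2 <= j)%N -> (j <= k.+2)%N ->
  to2 k.+1 (dg j x) = to2 k x.
Proof.
elim: k x j => [|k IH] x j hj1 hj2.
  have e : j = 2 by lia. subst j.
  change (fc 3 (dg 2 x) = x). by case: (fc_dg_eq x (isT : (2 <= 2)%N)).
change (to2 k.+1 (fc k.+4 (dg j x)) = to2 k.+1 x).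
case: (eqVneq j k.+3) => [e|hne].
  subst j. by case: (fc_dg_eq x (leqnn k.+3)) => _ ->.
rewrite fc_dg_gt /=; [|lia|lia].
apply: IH; lia.
Qed.

Lemma to2_E k j (x : ss X k.+1) : (j <= 1)%N -> exists y, to2 k (dg j x) = dg j y.
Proof.
move=> hj; elim: k x => [|k IH] x; first by exists x.
change (exists y, to2 k (fc k.+3 (dg j x)) = dg j y).
rewrite fc_dg_gt /=; [|lia|lia].
exact: IH.
Qed.

Variable H : zmodType.
Variable gamma : ss X 2 -> H.
Hypothesis hg : normalized_2cocycle gamma.

Lemma gamma_E k j (x : ss X k.+1) : (j <= 1)%N -> gamma (to2 k (dg j x)) = 0%R.
Proof.
move=> hj; case: (to2_E x hj) => y ->.
case: hg => h _; case: (h y) => h0 h1.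
by case: j hj => [|[|j]] // _.
Qed.

Lemma eta_from_eq k (y : ss X k.+2) : eta_from gamma k.+1 y =
  gamma (to2 k y) :: seq_sub (eta_from gamma k (fc 1 y)) (eta_from gamma k (fc 0 y)).
Proof. by case: k y. Qed.

Lemma size_eta m (x : ss X m.+1) : size (eta_from gamma m x) = m.
Proof.
elim: m x => [|k IH] x //.
by rewrite eta_from_eq /= size_seq_sub !IH minnn.
Qed.

Lemma P4 m (x : ss X m) : eta_from gamma m (dg 0 x) = nseq m 0%R.
Proof.
case: m x => [|k] x //.
rewrite eta_from_eq gamma_E //.
case: (fc_dg_eq x (leq0n k.+1)) => -> ->.
by rewrite seq_subss size_eta.
Qed.

Lemma seq_sub0' (s : seq H) n : size s = n -> seq_sub s (nseq n 0%R) = s.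
Proof. by move<-; apply: seq_sub0. Qed.

Lemma P5_1 m (x : ss X m.+1) : eta_from gamma m.+1 (dg 1 x) = ndeg 0 (eta_from gamma m x).
Proof.
rewrite eta_from_eq gamma_E // ndeg0.
case: (fc_dg_eq x (isT : (1 <= m.+1)%N)) => -> _.
rewrite fc_dg_lt //= P4 seq_sub0' //; exact: size_eta.
Qed.

Lemma P5 m j (x : ss X m.+1) : (0 < j)%N -> (j <= m.+1)%N ->
  eta_from gamma m.+1 (dg j x) = ndeg j.-1 (eta_from gamma m x).
Proof.
elim: m j x => [|k IH] j x hj1 hj2.
  have -> : j = 1 by lia.
  exact: P5_1.
case: j hj1 hj2 => [|[|j]] // hj1 hj2; first exact: P5_1.
rewrite [eta_from _ k.+2 _]eta_from_eq [eta_from _ k.+1 x]eta_from_eq to2_D; [|lia|lia]. rewrite ndegS.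
congr (_ :: _).
rewrite fc_dg_lt; [|lia|lia].
rewrite [fc 0 _]fc_dg_lt; [|lia|lia].
rewrite [j.+2.-1]/= !IH; [|lia|lia|lia|lia].
by rewrite ndeg_sub // !size_eta.
Qed.

Lemma cocy (sig : ss X 3) :
  (gamma (fc 3 sig) + (gamma (fc 1 sig) - gamma (fc 0 sig)) = gamma (fc 2 sig))%R.
Proof.
case: hg => _ /(_ sig) h.
apply/eqP; rewrite -subr_eq0 -oppr_eq0 -h; apply/eqP.
by rewrite opprB opprD opprB addrCA addrC [(gamma (fc 2 sig) + _)%R]addrC.
Qed.

Lemma P3 m i (x : ss X m.+2) : (0 < i)%N -> (i <= m.+1)%N ->
  nface i (eta_from gamma m.+1 x) = eta_from gamma m (fc i.+1 x).
Proof.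
elim: m i x => [|k IH] i x hi1 hi2.
  have -> : i = 1 by lia.
  by [].
case: i hi1 hi2 => [|[|i]] // hi1 hi2.
- rewrite !eta_from_eq seq_sub_cons nface1.
  rewrite to2_A !to2_B // cocy; congr (_ :: _).
  have e1 : fc 0 (fc 1 x) = fc 0 (fc 0 x) by rewrite ffc.
  have e2 : fc 1 (fc 2 x) = fc 1 (fc 1 x) by rewrite ffc.
  have e3 : fc 0 (fc 2 x) = fc 1 (fc 0 x) by rewrite ffc.
  by rewrite e1 e2 e3 seq_sub_sub // !size_eta.
- rewrite [eta_from _ k.+2 _]eta_from_eq [eta_from _ k.+1 (fc i.+3 x)]eta_from_eq.
  rewrite to2_C; [|lia|lia].
  rewrite nface_cons2; last by rewrite size_seq_sub !size_eta minnn.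
  congr (_ :: _).
  rewrite nface_sub; [| by rewrite !size_eta | by rewrite size_eta].
  rewrite !IH; [|lia|lia|lia|lia].
  have e1 : fc 1 (fc i.+3 x) = fc i.+2 (fc 1 x) by rewrite ffc //; lia.
  have e0 : fc 0 (fc i.+3 x) = fc i.+2 (fc 0 x) by rewrite ffc //; lia.
  by rewrite e1 e0.
Qed.

End Simp.

Theorem mainTheorem10 (H : zmodType) (X : sSet) (gamma : ss X 2 -> H) :
  normalized_2cocycle gamma -> twisting_function (eta_from gamma).
Proof.
move=> hg; split.
- exact: size_eta.
- by move=> m x; rewrite eta_from_eq.
- move=> m i x h1 h2; exact: P3.
- exact: P4.
- move=> m j x h1 h2; exact: P5.
Qed.
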